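(* Let $\omega>0$, $B>0$ and $\lambda\in\mathbb{R}$ with $-2\omega\le\lambda\le 0$. Let $\mathcal{D}_0\subset L^2(\mathbb{R}^2)$ be the set of functions $v$ that are twice differentiable on $\mathbb{R}^2\setminus\{x=0\}$, continuous across the line $x=0$, and satisfy the matching condition $\frac{\partial v}{\partial x}(0+,y)-\frac{\partial v}{\partial x}(0-,y)=\lambda y\, v(0,y)$ for all $y$. Let $H_{\mathrm{Sm}}(A)$ act on $\mathcal{D}_0$ as the differential expression $(i\nabla+A)^2+\omega^2y^2$ away from $x=0$, where $A=(-By,0)$, i.e. $(i\partial_x-By)^2-\partial_y^2+\omega^2y^2$ (the matching condition encoding the term $\lambda y\delta(x)$). Then $H_{\mathrm{Sm}}(A)\upharpoonright\mathcal{D}_0\ge 0$, i.e. $(H_{\mathrm{Sm}}(A)v,v)\ge0$ for all $v\in\mathcal{D}_0$; equivalently, for every $v\in\mathcal{D}_0$, $$\int_{\mathbb{R}^2}\Big(\big|i\partial_x v-Byv\big|^2+|\partial_y v|^2+\omega^2y^2|v|^2\Big)\,\mathrm{d}x\,\mathrm{d}y+\lambda\int_{\mathbb{R}}y\,|v(0,y)|^2\,\mathrm{d}y\ge0.$$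
   Context: $H_{\mathrm{Sm}}(A)$ is the formal operator $(i\nabla+A)^2+\omega^2y^2+\lambda y\delta(x)$ on $L^2(\mathbb{R}^2)$, where $A$ is the vector potential (Landau gauge $A=(-By,0)$) of a homogeneous magnetic field of intensity $B>0$ perpendicular to the plane. *)

(* Defs.v *)
From HB Require Import structures.
From mathcomp Require Import all_boot all_order all_algebra.
From mathcomp Require Import all_classical all_reals all_analysis.
Set Implicit Arguments. Unset Strict Implicit. Unset Printing Implicit Defensive.
Import Order.TTheory GRing.Theory Num.Theory.
Import numFieldNormedType.Exports.
Local Open Scope classical_set_scope.
Local Open Scope ring_scope.

(* A complex-valued function v on R^2 is represented by its real part p and
   imaginary part q : R * R -> R, i.e. v = p + i q, with points z = (x, y). *)

Notation leb2 R := ((@lebesgue_measure R) \x (@lebesgue_measure R))%E.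

Definition px (R : realType) (f : R * R -> R) (z : R * R) : R :=
  derive1 (fun t => f (t, z.2)) z.1.
Definition py (R : realType) (f : R * R -> R) (z : R * R) : R :=
  derive1 (fun t => f (z.1, t)) z.2.

(* f : R^2 -> R is twice (Frechet) differentiable at z: f is differentiable
   near z and its derivative, whose coordinates are (px f, py f), is
   differentiable at z. *)
Definition twice_differentiable_at (R : realType) (f : R * R -> R) (z : R * R) :=
  [/\ (\forall w \near z, differentiable f w),
      differentiable (px f) z & differentiable (py f) z].

Definition in_L2 (R : realType) (p q : R * R -> R) :=
  [/\ measurable_fun setT p, measurable_fun setT q &
      (\int[leb2 R]_z ((p z) ^+ 2 + (q z) ^+ 2)%:E < +oo)%E].

Definition D0 (R : realType) (lam : R) (p q : R * R -> R) :=
  [/\ in_L2 p q,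
      (forall z : R * R, z.1 != 0 ->
         twice_differentiable_at p z /\ twice_differentiable_at q z),
      (forall y : R, {for (0, y), continuous p} /\ {for (0, y), continuous q}) &
      (forall y : R, exists ap bp aq bq : R,
         [/\ (px p (x, y) @[x --> (0:R)^'+ ] --> ap),
             (px p (x, y) @[x --> (0:R)^'- ] --> bp),
             (px q (x, y) @[x --> (0:R)^'+ ] --> aq),
             (px q (x, y) @[x --> (0:R)^'- ] --> bq) &
             ap - bp = lam * y * p (0, y) /\ aq - bq = lam * y * q (0, y)])].

(* Bulk part of the quadratic form:
   int_{R^2} |i d_x v - B y v|^2 + |d_y v|^2 + w^2 y^2 |v|^2  (in [0, +oo]).
   With v = p + i q:  i d_x v - B y v = (- px q - B y p) + i (px p - B y q). *)
Definition bulk_form (R : realType) (B w : R) (p q : R * R -> R) : \bar R :=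
  (\int[leb2 R]_z
     ((px q z + B * z.2 * p z) ^+ 2 + (px p z - B * z.2 * q z) ^+ 2
      + (py p z) ^+ 2 + (py q z) ^+ 2
      + w ^+ 2 * z.2 ^+ 2 * ((p z) ^+ 2 + (q z) ^+ 2))%:E)%E.

Definition trace_sq (R : realType) (p q : R * R -> R) (y : R) : R :=
  (p (0, y)) ^+ 2 + (q (0, y)) ^+ 2.

(* Main.v *)
Require Import Defs.
From HB Require Import structures.
From mathcomp Require Import all_boot all_order all_algebra.
From mathcomp Require Import all_classical all_reals all_analysis.
From mathcomp Require Import ring lra.
From mathcomp Require Import measurable_realfun.
Import Order.TTheory GRing.Theory Num.Theory.
Import numFieldNormedType.Exports.
Local Open Scope classical_set_scope.
Local Open Scope ring_scope.

Module Aux.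
Set Implicit Arguments. Unset Strict Implicit. Unset Printing Implicit Defensive.

Section S.
Context {R : realType}.
Local Open Scope ereal_scope.

Lemma le_int_any d (T : measurableType d) (m : {measure set T -> \bar R})
  (D : set T) (f g : T -> \bar R) :
  (forall x, D x -> 0 <= g x) -> (forall x, D x -> f x <= g x) ->
  \int[m]_(x in D) f x <= \int[m]_(x in D) g x.
Proof.
move=> g0 fg.
rewrite integralE.
apply: (@le_trans _ _ (\int[m]_(x in D) f^\+ x)).
  have h0 : 0 <= \int[m]_(x in D) f^\- x by apply: integral_ge0 => x _; exact: funeneg_ge0.
  by rewrite -[X in _ <= X]sube0; exact: leeB.
have f0 : forall x, D x -> 0 <= f^\+ x by move=> x _; exact: funepos_ge0.
rewrite !ge0_integralE//.
apply: le_ereal_sup => _ [h /= hf <-]; exists h => //= x.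
apply: (le_trans (hf x)); rewrite /patch; case: ifP => // /[1!inE] Dx.
by rewrite funeposE ge_max fg// g0.
Qed.

Local Close Scope ereal_scope.
Lemma sec_derivable (p : R * R -> R) (z : R * R) :
  differentiable p z -> derivable (fun t => p (t, z.2)) z.1 1.
Proof.
move=> dp; have := @diff_derivable _ _ _ p z ((1, 0) : R * R) dp.
rewrite /derivable; set F := (fun h => _); set G := (fun h => _).
suff -> : F = G by [].
apply: funext => h; rewrite /F /G /=.
case: z {F G dp} => a b /=.
congr (_ *: (p _ - _)).
by congr pair; rewrite /= scaler0 add0r.
Qed.

Lemma sec_cont (p : R * R -> R) (z : R * R) :
  differentiable p z -> {for z.1, continuous (fun t => p (t, z.2))}.
Proof.
move=> /sec_derivable /derivable1_diffP /differentiable_continuous //.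
Qed.

Lemma sec_is_derive (p : R * R -> R) (z : R * R) :
  differentiable p z -> is_derive z.1 1 (fun t => p (t, z.2)) (px p z).
Proof.
move=> /sec_derivable H; rewrite /px derive1E; exact: derivableP.
Qed.

Lemma is_derive_cont (f : R -> R) (x d : R) : is_derive x (1:R) f d -> {for x, continuous f}.
Proof. by move=> H; have /derivable1_diffP /differentiable_continuous := @ex_derive _ _ _ _ _ _ _ H. Qed.

Lemma le_int_sub (D1 D2 : set R) (k : R -> \bar R) :
  D1 `<=` D2 -> (forall x, D2 x -> (0 <= k x)%E) ->
  (\int[@lebesgue_measure R]_(x in D1) k x <= \int[@lebesgue_measure R]_(x in D2) k x)%E.
Proof.
move=> D12 k0; rewrite integral_mkcond [X in (_ <= X)%E]integral_mkcond.
apply: le_int_any => x _; rewrite /patch.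
  by case: ifPn => [/[1!inE] /k0 //|_].
case: ifPn => [/[1!inE] /D12 H2|_]; first by rewrite ifT ?inE.
by case: ifPn => [/[1!inE] /k0 //|_].
Qed.

End S.

Section H.
Context {R : realType}.
Notation mu := (@lebesgue_measure R).

Lemma cvg_sq T (F : set_system T) (FF : Filter F) (f : T -> R) (a : R) :
  f @ F --> a -> (fun x => f x ^+ 2) @ F --> a ^+ 2.
Proof.
move=> fa; have -> : (fun x => f x ^+ 2) = (f \* f) by apply: funext => x; rewrite /= expr2.
by rewrite expr2; exact: cvgM.
Qed.

Lemma half_right (P Q P' Q' k : R -> R) (b c : R) :
  0 < c ->
  {for 0, continuous P} -> {for 0, continuous Q} ->
  (forall x : R, 0 < x -> [/\ is_derive x (1:R) P (P' x), is_derive x (1:R) Q (Q' x),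
      {for x, continuous P'} & {for x, continuous Q'}]) ->
  (forall x : R, 0 < x -> (Q' x + b * P x) ^+ 2 + (P' x - b * Q x) ^+ 2
      + c ^+ 2 * (P x ^+ 2 + Q x ^+ 2) <= k x) ->
  ((c * (P 0 ^+ 2 + Q 0 ^+ 2))%:E <= \int[mu]_(x in `]0%R, +oo[) (k x)%:E)%E.
Proof.
move=> c0 cP cQ dH kH.
have k0 x : 0 < x -> 0 <= k x.
  move=> x0; apply: le_trans (kH x x0).
  by apply: addr_ge0; [apply: addr_ge0; exact: sqr_ge0| apply: mulr_ge0; [exact: sqr_ge0| apply: addr_ge0; exact: sqr_ge0]].
set I := (\int[mu]_(x in `]0%R, +oo[) (k x)%:E)%E.
have I0 : (0 <= I)%E.
  by apply: integral_ge0 => x; rewrite /= in_itv /= andbT => /k0; rewrite lee_fin.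
have [->|Ioo] := eqVneq I +oo%E; first by rewrite leey.
have Ifin : I \is a fin_num by rewrite ge0_fin_numE // ltey.
rewrite -(fineK Ifin) lee_fin.
set r := fine I.
set g := fun x => P x ^+ 2 + Q x ^+ 2.
have small e : 0 < e -> exists2 X, 0 < X & g X < e.
  move=> e0; apply: contrapT => H.
  have H' X : 0 < X -> e <= g X.
    by move=> X0; rewrite leNgt; apply/negP => gX; apply: H; exists X.
  have : (+oo <= I)%E.
    have -> : +oo%E = (\int[mu]_(x in `]0%R, +oo[) (cst (c ^+ 2 * e)%:E x))%E.
      rewrite integral_cst //= lebesgue_measure_itv /= ltry addye //.
      by rewrite mulry gtr0_sg ?mul1e // mulr_gt0 // exprn_gt0.
    apply: le_int_any => x; rewrite /= in_itv /= andbT => x0; rewrite lee_fin.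
      exact: k0.
    apply: le_trans (kH x x0).
    have := H' x x0; rewrite /g => h.
    have := sqr_ge0 (Q' x + b * P x); have := sqr_ge0 (P' x - b * Q x).
    have := sqr_ge0 c. nra.
  by rewrite leye_eq (negPf Ioo).
have key X : 0 < X -> c * g 0 - c * g X <= r.
  move=> X0.
  pose F := fun t : R => - (c * g t).
  pose f := fun t : R => - (c * (2 * (P t * P' t + Q t * Q' t))).
  have dF (t : R) : 0 < t -> is_derive t (1:R) F (f t).
    move=> t0; have [dP dQ _ _] := dH t t0.
    have := is_deriveN (is_deriveZ c (is_deriveD (is_deriveX 2 dP) (is_deriveX 2 dQ))).
    have -> : (- (c \*: (P ^+ 2 + Q ^+ 2))) = F.
      by apply: funext => u; rewrite /F /g /= !exprfctE.
    move=> D; apply: is_derive_eq; rewrite /f /= expr1.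
    by rewrite -![_ *: _]/(_ * _); ring.
  have kf x : 0 < x -> f x <= k x.
    move=> x0; apply: le_trans (kH x x0); rewrite /f.
    have := sqr_ge0 (P' x - b * Q x + c * P x).
    have := sqr_ge0 (Q' x + b * P x + c * Q x). nra.
  have hle a : 0 < a < X -> c * g a - c * g X <= r.
    case/andP => a0 aX.
    have := @continuous_FTC2 R f F a X aX.
    have cf : {within `[a, X], continuous f}.
      apply: continuous_in_subspaceT => t; rewrite inE /= in_itv /= => /andP[ha _].
      have t0 : 0 < t by exact: lt_le_trans ha.
      have [dP dQ cP' cQ'] := dH t t0.
      have cPt := is_derive_cont dP; have cQt := is_derive_cont dQ.
      rewrite /f; apply: cvgN; apply: cvgM; first exact: cvg_cst.
      apply: cvgM; first exact: cvg_cst.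
      by apply: cvgD; apply: cvgM.
    have dFo : derivable_oo_LRcontinuous F a X.
      split.
      - move=> t; rewrite in_itv /= => /andP[ha _].
        exact: (@ex_derive _ _ _ _ _ _ _ (dF t (lt_trans a0 ha))).
      - by apply: cvg_at_right_filter; exact: (is_derive_cont (dF a a0)).
      - by apply: cvg_at_left_filter; exact: (is_derive_cont (dF X X0)).
    have dFf : {in `]a, X[, derive1 F =1 f}.
      move=> t; rewrite in_itv /= => /andP[ha _].
      rewrite derive1E; exact: (@derive_val _ _ _ _ _ _ _ (dF t (lt_trans a0 ha))).
    move=> /(_ cf dFo dFf) eqI.
    have : (\int[mu]_(x in `[a, X]) (f x)%:E <= I)%E.
      apply: (@le_trans _ _ (\int[mu]_(x in `[a, X]) (k x)%:E)%E).
        apply: le_int_any => x; rewrite /= in_itv /= => /andP[ax _];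
          have x0 : 0 < x by exact: lt_le_trans ax.
          by rewrite lee_fin; exact: k0.
        by rewrite lee_fin; exact: kf.
      apply: le_int_sub.
        by move=> x; rewrite /= !in_itv /= andbT => /andP[ax _]; exact: lt_le_trans ax.
      by move=> x; rewrite /= in_itv /= andbT => x0; rewrite lee_fin; exact: k0.
    rewrite eqI -(fineK Ifin) -EFinB lee_fin /F -/r. lra.
  apply: (@cvgr_to_le R ((0:R)^'+) _ R (fun a => c * g a - c * g X)).
    apply: cvg_at_right_filter; apply: cvgB; last exact: cvg_cst.
    apply: cvgM; first exact: cvg_cst.
    by apply: cvgD; apply: cvg_sq.
  near=> a; apply: hle; apply/andP; split; near: a; [exact: nbhs_right_gt | exact: nbhs_right_lt].
apply/ler_addgt0Pr => e e0.
have [X X0 gX] := small (e / c) (divr_gt0 e0 c0).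
have := key X X0.
have : c * g X < e by rewrite mulrC -ltr_pdivlMr.
rewrite /g; lra.
Unshelve. all: by end_near.
Qed.
Lemma half_left (P Q P' Q' k : R -> R) (b c : R) :
  0 < c ->
  {for 0, continuous P} -> {for 0, continuous Q} ->
  (forall x : R, x < 0 -> [/\ is_derive x (1:R) P (P' x), is_derive x (1:R) Q (Q' x),
      {for x, continuous P'} & {for x, continuous Q'}]) ->
  (forall x : R, x < 0 -> (Q' x + b * P x) ^+ 2 + (P' x - b * Q x) ^+ 2
      + c ^+ 2 * (P x ^+ 2 + Q x ^+ 2) <= k x) ->
  ((c * (P 0 ^+ 2 + Q 0 ^+ 2))%:E <= \int[mu]_(x in `]-oo, 0%R[) (k x)%:E)%E.
Proof.
move=> c0 cP cQ dH kH.
have k0 x : x < 0 -> 0 <= k x.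
  move=> x0; apply: le_trans (kH x x0).
  by apply: addr_ge0; [apply: addr_ge0; exact: sqr_ge0| apply: mulr_ge0; [exact: sqr_ge0| apply: addr_ge0; exact: sqr_ge0]].
set I := (\int[mu]_(x in `]-oo, 0%R[) (k x)%:E)%E.
have I0 : (0 <= I)%E.
  by apply: integral_ge0 => x; rewrite /= in_itv /= => /k0; rewrite lee_fin.
have [->|Ioo] := eqVneq I +oo%E; first by rewrite leey.
have Ifin : I \is a fin_num by rewrite ge0_fin_numE // ltey.
rewrite -(fineK Ifin) lee_fin.
set r := fine I.
set g := fun x => P x ^+ 2 + Q x ^+ 2.
have small e : 0 < e -> exists2 X, X < 0 & g X < e.
  move=> e0; apply: contrapT => H.
  have H' X : X < 0 -> e <= g X.
    by move=> X0; rewrite leNgt; apply/negP => gX; apply: H; exists X.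
  have : (+oo <= I)%E.
    have -> : +oo%E = (\int[mu]_(x in `]-oo, 0%R[) (cst (c ^+ 2 * e)%:E x))%E.
      rewrite integral_cst //= lebesgue_measure_itv /= ltNyr add0e.
      by rewrite mulry gtr0_sg ?mul1e // mulr_gt0 // exprn_gt0.
    apply: le_int_any => x; rewrite /= in_itv /= => x0; rewrite lee_fin.
      exact: k0.
    apply: le_trans (kH x x0).
    have := H' x x0; rewrite /g => h.
    have := sqr_ge0 (Q' x + b * P x); have := sqr_ge0 (P' x - b * Q x).
    have := sqr_ge0 c. nra.
  by rewrite leye_eq (negPf Ioo).
have key X : X < 0 -> c * g 0 - c * g X <= r.
  move=> X0.
  pose F := fun t : R => c * g t.
  pose f := fun t : R => c * (2 * (P t * P' t + Q t * Q' t)).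
  have dF (t : R) : t < 0 -> is_derive t (1:R) F (f t).
    move=> t0; have [dP dQ _ _] := dH t t0.
    have := is_deriveZ c (is_deriveD (is_deriveX 2 dP) (is_deriveX 2 dQ)).
    have -> : (c \*: (P ^+ 2 + Q ^+ 2)) = F.
      by apply: funext => u; rewrite /F /g /= !exprfctE.
    move=> D; apply: is_derive_eq; rewrite /f /= expr1.
    by rewrite -![_ *: _]/(_ * _); ring.
  have kf x : x < 0 -> f x <= k x.
    move=> x0; apply: le_trans (kH x x0); rewrite /f.
    have := sqr_ge0 (P' x - b * Q x - c * P x).
    have := sqr_ge0 (Q' x + b * P x - c * Q x). nra.
  have hle a : X < a < 0 -> c * g a - c * g X <= r.
    case/andP => Xa a0.
    have := @continuous_FTC2 R f F X a Xa.
    have cf : {within `[X, a], continuous f}.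
      apply: continuous_in_subspaceT => t; rewrite inE /= in_itv /= => /andP[_ ha].
      have t0 : t < 0 by exact: le_lt_trans ha a0.
      have [dP dQ cP' cQ'] := dH t t0.
      have cPt := is_derive_cont dP; have cQt := is_derive_cont dQ.
      rewrite /f; apply: cvgM; first exact: cvg_cst.
      apply: cvgM; first exact: cvg_cst.
      by apply: cvgD; apply: cvgM.
    have dFo : derivable_oo_LRcontinuous F X a.
      split.
      - move=> t; rewrite in_itv /= => /andP[_ ha].
        exact: (@ex_derive _ _ _ _ _ _ _ (dF t (lt_trans ha a0))).
      - by apply: cvg_at_right_filter; exact: (is_derive_cont (dF X X0)).
      - by apply: cvg_at_left_filter; exact: (is_derive_cont (dF a a0)).
    have dFf : {in `]X, a[, derive1 F =1 f}.
      move=> t; rewrite in_itv /= => /andP[_ ha].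
      rewrite derive1E; exact: (@derive_val _ _ _ _ _ _ _ (dF t (lt_trans ha a0))).
    move=> /(_ cf dFo dFf) eqI.
    have : (\int[mu]_(x in `[X, a]) (f x)%:E <= I)%E.
      apply: (@le_trans _ _ (\int[mu]_(x in `[X, a]) (k x)%:E)%E).
        apply: le_int_any => x; rewrite /= in_itv /= => /andP[_ ha];
          have x0 : x < 0 by exact: le_lt_trans ha a0.
          by rewrite lee_fin; exact: k0.
        by rewrite lee_fin; exact: kf.
      apply: le_int_sub.
        by move=> x; rewrite /= !in_itv /= => /andP[_ ha]; exact: le_lt_trans ha a0.
      by move=> x; rewrite /= in_itv /= => x0; rewrite lee_fin; exact: k0.
    rewrite eqI -(fineK Ifin) -EFinB lee_fin /F -/r. lra.
  apply: (@cvgr_to_le R ((0:R)^'-) _ R (fun a => c * g a - c * g X)).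
    apply: cvg_at_left_filter; apply: cvgB; last exact: cvg_cst.
    apply: cvgM; first exact: cvg_cst.
    by apply: cvgD; apply: cvg_sq.
  near=> a; apply: hle; apply/andP; split; near: a; [exact: nbhs_left_gt | exact: nbhs_left_lt].
apply/ler_addgt0Pr => e e0.
have [X X0 gX] := small (e / c) (divr_gt0 e0 c0).
have := key X X0.
have : c * g X < e by rewrite mulrC -ltr_pdivlMr.
rewrite /g; lra.
Unshelve. all: by end_near. Qed.

End H.

Section M.
Context {R : realType}.

Lemma dq_cvg (p : R * R -> R) (z : R * R) : differentiable p z ->
  (fun n => (harmonic n)^-1 * (p (z.1 + harmonic n, z.2) - p z)) @ \oo --> px p z.
Proof.
move=> dp; have D := sec_derivable dp.
rewrite /px derive1E.
move: D; rewrite /derivable => D.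
have := (cvgr_dnbhsP _ _ _).1 D harmonic.
move=> /(_ (conj (fun n => lt0r_neq0 (harmonic_gt0 n)) cvg_harmonic)).
set L := lim _; have -> : L = 'D_1 (fun t : R => p (t, z.2)) z.1 by [].
apply: cvg_trans; apply: near_eq_cvg; apply: nearW => n /=.
rewrite /shift /= -[_ *: _]/(_ * _) [_%:A]mulr1 (addrC _ z.1).
by case: z {dp D L}.
Qed.

Definition Hf (B w : R) (p q : R * R -> R) (z : R * R) : R :=
  \1_[set z : R * R | z.1 != 0] z *
  ((px q z + B * z.2 * p z) ^+ 2 + (px p z - B * z.2 * q z) ^+ 2
   + w ^+ 2 * z.2 ^+ 2 * (p z ^+ 2 + q z ^+ 2)).

Lemma measurable_shift (c : R) :
  measurable_fun setT (fun z : R * R => (z.1 + c, z.2)).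
Proof.
apply: measurable_fun_pair => //.
by apply: measurable_funD => //; exact: measurable_fst.
Qed.

Lemma mA : measurable [set z : R * R | z.1 != 0].
Proof.
have -> : [set z : R * R | z.1 != 0] = setT `&` fst @^-1` (~` [set (0:R)]).
  by apply/seteqP; split => z /=; [move=> h; split => //; exact/eqP | case=> _ /eqP].
apply: measurable_fst => //; exact: measurableC.
Qed.

Lemma Hf_meas (B w : R) (p q : R * R -> R) : measurable_fun setT p -> measurable_fun setT q ->
  (forall z : R * R, z.1 != 0 -> differentiable p z /\ differentiable q z) ->
  measurable_fun setT (Hf B w p q).
Proof.
move=> mp mq dpq.
pose D (f : R * R -> R) n z := (harmonic n)^-1 * (f (z.1 + harmonic n, z.2) - f z).
have mD f n : measurable_fun setT f -> measurable_fun setT (D f n).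
  move=> mf; apply: measurable_funM => //.
  apply: measurable_funB => //.
  exact: (measurableT_comp mf (measurable_shift _)).
pose Hn n z := \1_[set z : R * R | z.1 != 0] z *
  ((D q n z + B * z.2 * p z) ^+ 2 + (D p n z - B * z.2 * q z) ^+ 2
   + w ^+ 2 * z.2 ^+ 2 * (p z ^+ 2 + q z ^+ 2)).
apply: (@measurable_fun_cvg _ _ _ _ Hn).
  move=> n; apply: measurable_funM; first exact: measurable_indic mA.
  have ms : measurable_fun setT (fun z : R * R => z.2) := measurable_snd.
  have mDp := mD p n mp; have mDq := mD q n mq.
  by repeat first [apply: measurable_funN | apply: measurable_funD | apply: measurable_funB | apply: measurable_funM
    | apply: measurable_funX | exact: mDp | exact: mDq | exact: measurable_cst | exact: ms
    | exact: mp | exact: mq | exact: (measurableT_comp mq (measurable_shift _))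
    | exact: (measurableT_comp mp (measurable_shift _))].
move=> z _; have [z0|z0] := eqVneq z.1 0.
  have -> : (fun n => Hn n z) = (fun=> 0).
    by apply: funext => n; rewrite /Hn indicE memNset ?mul0r //= z0 eqxx.
  by rewrite /Hf indicE memNset ?mul0r //= ?z0 ?eqxx //; exact: cvg_cst.
have -> : (fun n => Hn n z) = (fun n => (D q n z + B * z.2 * p z) ^+ 2 + (D p n z - B * z.2 * q z) ^+ 2 +
     w ^+ 2 * z.2 ^+ 2 * (p z ^+ 2 + q z ^+ 2)).
  by apply: funext => n; rewrite /Hn indicE mem_set ?mul1r.
rewrite /Hf indicE mem_set ?mul1r //.
have [dp dq] := dpq z z0.
have cp := dq_cvg dp; have cq := dq_cvg dq.
apply: cvgD; last exact: cvg_cst.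
apply: cvgD; apply: cvg_sq.
  by apply: cvgD => //; exact: cvg_cst.
by apply: cvgB => //; exact: cvg_cst.
Qed.
End M.

Section Y.
Context {R : realType}.
Notation mu := (@lebesgue_measure R).

Lemma per_y (w B lam : R) (p q : R * R -> R) (y : R) :
  0 < w -> -(2 * w) <= lam -> lam <= 0 -> 0 < y ->
  measurable_fun setT (Hf B w p q) ->
  (forall z : R * R, z.1 != 0 ->
         twice_differentiable_at p z /\ twice_differentiable_at q z) ->
  {for (0, y), continuous p} -> {for (0, y), continuous q} ->
  ((- (lam * y * trace_sq p q y))%:E <= \int[mu]_x (Hf B w p q (x, y))%:E)%E.
Proof.
move=> w0 lamlb lam0 y0 mH tw cp cq.
set c := w * y; set b := B * y.
have c0 : 0 < c by exact: mulr_gt0.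
pose P := fun x => p (x, y); pose Q := fun x => q (x, y).
pose P' := fun x => px p (x, y); pose Q' := fun x => px q (x, y).
pose k := fun x => Hf B w p q (x, y).
have cP : {for 0, continuous P}.
  have cf : {for 0, continuous (fun x : R => (x, y))}.
    exact: (cvg_pair cvg_id (cvg_cst y)).
  exact: (continuous_comp cf cp).
have cQ : {for 0, continuous Q}.
  have cf : {for 0, continuous (fun x : R => (x, y))}.
    exact: (cvg_pair cvg_id (cvg_cst y)).
  exact: (continuous_comp cf cq).
have dH x : x != 0 -> [/\ is_derive x (1:R) P (P' x), is_derive x (1:R) Q (Q' x),
      {for x, continuous P'} & {for x, continuous Q'}].
  move=> x0; have [[np dpx _] [nq dqx _]] := tw (x, y) x0.
  have dp : differentiable p (x, y) by exact: (nbhs_singleton np).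
  have dq : differentiable q (x, y) by exact: (nbhs_singleton nq).
  split.
  - exact: (sec_is_derive dp).
  - exact: (sec_is_derive dq).
  - exact: (sec_cont dpx).
  - exact: (sec_cont dqx).
have kH x : x != 0 -> (Q' x + b * P x) ^+ 2 + (P' x - b * Q x) ^+ 2
      + c ^+ 2 * (P x ^+ 2 + Q x ^+ 2) <= k x.
  move=> x0; rewrite /k /Hf indicE mem_set // mul1r /P /Q /P' /Q' /b /c /=.
  rewrite exprMn !mulrA; exact: lexx.
have k0 x : 0 <= k x.
  rewrite /k /Hf indicE; apply: mulr_ge0 => //.
  by apply: addr_ge0; [apply: addr_ge0; exact: sqr_ge0| apply: mulr_ge0; [apply: mulr_ge0; exact: sqr_ge0| apply: addr_ge0; exact: sqr_ge0]].
have hr := half_right c0 cP cQ (fun x x0 => dH x (lt0r_neq0 x0)) (fun x x0 => kH x (lt0r_neq0 x0)).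
have hl := half_left c0 cP cQ (fun x x0 => dH x (ltr0_neq0 x0)) (fun x x0 => kH x (ltr0_neq0 x0)).
have mk : measurable_fun setT (fun x => (k x)%:E).
  by apply/measurable_EFinP; exact: measurable_fun_pair1.
apply: (@le_trans _ _ (\int[mu]_(x in `]-oo, 0%R[ `|` `]0%R, +oo[) (k x)%:E)%E); last first.
  by apply: le_int_sub => // x _; rewrite lee_fin.
rewrite ge0_integral_setU //=.
- apply: le_trans (leeD hl hr); rewrite -EFinD lee_fin.
  rewrite /trace_sq /P /Q /c.
  have t0 : 0 <= p (0, y) ^+ 2 + q (0, y) ^+ 2 by apply: addr_ge0; exact: sqr_ge0.
  have : 0 <= (lam + 2 * w) * (y * (p (0, y) ^+ 2 + q (0, y) ^+ 2)).
    by apply: mulr_ge0; [lra | apply: mulr_ge0 => //; exact: ltW].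
  nra.
- exact: measurable_funTS.
- by move=> x _; rewrite lee_fin.
- apply/disj_setPS => x []; rewrite /= !in_itv /= andbT => x0 x1.
  by have := lt_trans x0 x1; rewrite ltxx.
Qed.
End Y.

End Aux.
Import Aux.

Theorem mainTheorem1 (R : realType) (w B lam : R) (p q : R * R -> R) :
  0 < w -> 0 < B -> -(2 * w) <= lam -> lam <= 0 ->
  D0 lam p q ->
  (\int[@lebesgue_measure R]_(y in `]0%R, +oo[) (- (lam * y * trace_sq p q y))%:E
   <= bulk_form B w p q
      + \int[@lebesgue_measure R]_(y in `]-oo, 0%R[) (lam * y * trace_sq p q y)%:E)%E.
Proof.
move=> w0 B0 lamlb lam0 [[mp mq _] tw c0 _].
have dpq (z : R * R) : z.1 != 0 -> differentiable p z /\ differentiable q z.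
  move=> z0; have [[np _ _] [nq _ _]] := tw z z0.
  by split; [exact: (nbhs_singleton np) | exact: (nbhs_singleton nq)].
set H := Hf B w p q.
have mH : measurable_fun setT H := Hf_meas B w mp mq dpq.
have H0 z : 0 <= H z.
  rewrite /H /Hf indicE; apply: mulr_ge0 => //.
  by apply: addr_ge0; [apply: addr_ge0; exact: sqr_ge0| apply: mulr_ge0; [apply: mulr_ge0; exact: sqr_ge0| apply: addr_ge0; exact: sqr_ge0]].
have stepA : (\int[leb2 R]_z (H z)%:E <= bulk_form B w p q)%E.
  rewrite /bulk_form; apply: le_int_any => z _; rewrite lee_fin.
    have := sqr_ge0 (px q z + B * z.2 * p z); have := sqr_ge0 (px p z - B * z.2 * q z).
    have := sqr_ge0 (py p z); have := sqr_ge0 (py q z).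
    have := sqr_ge0 (p z); have := sqr_ge0 (q z); have := sqr_ge0 w; have := sqr_ge0 z.2.
    nra.
  rewrite /H /Hf indicE; case: (_ \in _); rewrite ?mul1r ?mul0r.
    have := sqr_ge0 (py p z); have := sqr_ge0 (py q z); lra.
  have := sqr_ge0 (px q z + B * z.2 * p z); have := sqr_ge0 (px p z - B * z.2 * q z).
  have := sqr_ge0 (py p z); have := sqr_ge0 (py q z).
  have := sqr_ge0 (p z); have := sqr_ge0 (q z); have := sqr_ge0 w; have := sqr_ge0 z.2.
  nra.
have stepB : (\int[leb2 R]_z (H z)%:E
    = \int[@lebesgue_measure R]_y \int[@lebesgue_measure R]_x (H (x, y))%:E)%E.
  have mEH : measurable_fun setT (EFin \o H) by exact/measurable_EFinP.
  have EH0 : forall z, (0 <= (EFin \o H) z)%E by move=> z /=; rewrite lee_fin.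
  have := @fubini_tonelli2 _ _ _ _ R (@lebesgue_measure R) (@lebesgue_measure R) (EFin \o H) mEH EH0.
  by [].
apply: (@le_trans _ _ (bulk_form B w p q)); last first.
  apply: leeDl; apply: integral_ge0 => y; rewrite /= in_itv /= => y0.
  rewrite lee_fin /trace_sq; apply: mulr_ge0.
    by apply: mulr_le0 => //; exact: ltW.
  by apply: addr_ge0; exact: sqr_ge0.
apply: le_trans stepA; rewrite stepB.
apply: (@le_trans _ _ (\int[@lebesgue_measure R]_(y in `]0%R, +oo[)
   \int[@lebesgue_measure R]_x (H (x, y))%:E)%E).
  apply: le_int_any => y; rewrite /= in_itv /= andbT => y0.
    by apply: integral_ge0 => x _; rewrite lee_fin.
  apply: per_y => //; [exact: (c0 y).1 | exact: (c0 y).2].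
apply: le_int_sub => // y _.
by apply: integral_ge0 => x _; rewrite lee_fin.
Qed.
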